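(* Let $0 \neq q \in \mathbb{C}$ with $q^{2} \neq 1$, let $\xi = -(1+q)^{2}/(q-q^{-1})$, and define complex numbers $\phi_{\beta}$, $\beta \in \mathbb{Z}_{+}$, recursively by $\phi_{0} = 1$, $\phi_{1} = 1$, and $\phi_{\beta} = \phi_{\beta-1} + \xi [\beta-1]_{q^{2}} \phi_{\beta-2}$ for $\beta \geq 2$. Then for each $i \in \mathbb{N}$, $$\phi_{2i} = (1-q)^{-i}\, \Psi_{2i}, \qquad \phi_{2i+1} = [2i+1]_{q}\, \phi_{2i},$$ where $$\Psi_{2i} = \frac{[4]_{q}}{[2]_{q}}\, [3]_{q}\, \frac{[8]_{q}}{[4]_{q}}\, [5]_{q}\, \frac{[12]_{q}}{[6]_{q}}\, [7]_{q} \cdots [2i-1]_{q}\, \frac{[4i]_{q}}{[2i]_{q}} = \prod_{j=1}^{i} \frac{[4j]_{q}}{[2j]_{q}} \cdot \prod_{j=1}^{i-1} [2j+1]_{q}.$$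
   Context: $\mathbb{N} = \{1,2,3,\ldots\}$ and $\mathbb{Z}_{+} = \mathbb{N}\cup\{0\}$. For $0 \neq p \in \mathbb{C}$ with $p \neq 1$ and $n \in \mathbb{Z}_{+}$: $[n]_{p} = \frac{1-p^{n}}{1-p}$; this is used with $p = q$ and $p = q^{2}$. *)

(* Defs.v *)
From HB Require Import structures.
From mathcomp Require Import all_boot all_order all_algebra.
From mathcomp Require Import complex Rstruct.
Set Implicit Arguments. Unset Strict Implicit. Unset Printing Implicit Defensive.
Import Order.TTheory GRing.Theory Num.Theory.
Local Open Scope ring_scope.

Definition C : Type := (Rdefinitions.R)[i].

Definition qint (p : C) (n : nat) : C := (1 - p ^+ n) / (1 - p).

Definition xi (q : C) : C := - (1 + q) ^+ 2 / (q - q^-1).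

Definition Psi (q : C) (i : nat) : C :=
  (\prod_(1 <= j < i.+1) (qint q (4 * j) / qint q (2 * j)))
  * \prod_(1 <= j < i) qint q (2 * j + 1).

(* Main.v *)
Require Import Defs.
From HB Require Import structures.
From mathcomp Require Import all_boot all_order all_algebra.
From mathcomp Require Import complex Rstruct.
From mathcomp Require Import ring zify.
Import Order.TTheory GRing.Theory Num.Theory.
Local Open Scope ring_scope.

Lemma pw (q : C) i k : q ^+ (2 * i + k) = (q ^+ i) ^+ 2 * q ^+ k.
Proof. by rewrite -exprM exprD mulnC. Qed.

Lemma pw2 (q : C) i k : (q ^+ 2) ^+ (2 * i + k) = ((q ^+ i) ^+ 2) ^+ 2 * (q ^+ 2) ^+ k.
Proof. by rewrite exprD -!exprM; congr (_ * _); congr (_ ^+ _); lia. Qed.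

Section S.
Variables (q : C) (phi : nat -> C).
Hypotheses (hq : q != 0) (hq2 : q ^+ 2 != 1) (h0 : phi 0%N = 1) (h1 : phi 1%N = 1)
  (hr : forall b : nat, (2 <= b)%N ->
     phi b = phi (b - 1)%N + xi q * qint (q ^+ 2) (b - 1) * phi (b - 2)%N).

Let h1q : 1 - q != 0.
Proof. apply/eqP => e; move/eqP: hq2; apply.
have -> : q = 1 by apply/eqP; rewrite eq_sym -subr_eq0 e.
by rewrite expr1n. Qed.
Let h1q2 : 1 - q ^+ 2 != 0.
Proof. by rewrite subr_eq0 eq_sym. Qed.

Definition A i := phi (2 * i + 1)%N = qint q (2 * i + 1) * phi (2 * i)%N.
Definition B i := phi (2 * i + 2)%N =
  (1 + q ^+ (2 * i + 2)) * qint q (2 * i + 1) / (1 - q) * phi (2 * i)%N.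

Lemma AB i : A i -> B i.
Proof.
rewrite /A /B => hA.
rewrite hr; last lia.
have -> : (2 * i + 2 - 1 = 2 * i + 1)%N by lia.
have -> : (2 * i + 2 - 2 = 2 * i)%N by lia.
rewrite hA /qint /xi !pw2 !pw.
field. by rewrite h1q h1q2 hq -expr2 subr_eq0 hq2.
Qed.

Lemma AA i : A i -> A i.+1.
Proof.
move=> hA; have hB := AB i hA; move: hA hB; rewrite /A /B => hA hB.
have -> : (2 * i.+1 + 1 = (2 * i + 3))%N by lia.
have -> : (2 * i.+1 = (2 * i + 2))%N by lia.
rewrite hr; last lia.
have -> : (2 * i + 3 - 1 = 2 * i + 2)%N by lia.
have -> : (2 * i + 3 - 2 = 2 * i + 1)%N by lia.
rewrite hB hA /qint /xi !pw2 !pw.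
field. by rewrite h1q h1q2 hq -expr2 subr_eq0 hq2.
Qed.

Lemma Aall i : A i.
Proof.
elim: i => [|i IH]; last exact: AA.
by rewrite /A /= h1 h0 /qint expr1 divff // mulr1.
Qed.

Lemma closed i : phi (2 * i)%N =
  (1 - q) ^- i * \prod_(0 <= j < i) ((1 + q ^+ (2 * j + 2)) * qint q (2 * j + 1)).
Proof.
elim: i => [|i IH]; first by rewrite big_geq // h0 expr0 invr1 mulr1.
have -> : (2 * i.+1 = 2 * i + 2)%N by lia.
rewrite (AB i (Aall i)) IH big_nat_recr //= exprS invrM ?unitfE ?expf_neq0 //.
field. by rewrite h1q expf_neq0.
Qed.

End S.

Theorem lemma3 (q : C) (phi : nat -> C) :
  q != 0 -> q ^+ 2 != 1 ->
  phi 0%N = 1 -> phi 1%N = 1 ->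
  (forall b : nat, (2 <= b)%N ->
     phi b = phi (b - 1)%N + xi q * qint (q ^+ 2) (b - 1) * phi (b - 2)%N) ->
  forall i : nat, (1 <= i)%N ->
    ((forall j : nat, (1 <= j <= i)%N -> qint q (2 * j) != 0) ->
       phi (2 * i)%N = (1 - q) ^- i * Psi q i)
    /\ phi (2 * i + 1)%N = qint q (2 * i + 1) * phi (2 * i)%N.
Proof.
move=> hq hq2 h0 h1 hr i hi; split; last exact: (Aall q phi hq hq2 h0 h1 hr i).
move=> hnz.
rewrite (closed q phi hq hq2 h0 h1 hr); congr (_ * _).
rewrite big_split /= /Psi; congr (_ * _).
  rewrite big_add1 /=; apply: eq_big_nat => j /andP [_ hj].
  have hz := hnz j.+1 (hj : (0 < j.+1 <= i)%N).
  have -> : (2 * j + 2 = 2 * j.+1)%N by lia.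
  have -> : (4 * j.+1 = 2 * j.+1 + 2 * j.+1)%N by lia.
  move: hz; rewrite /qint exprD; set x := q ^+ (2 * j.+1) => hz.
  have hx : 1 - x != 0 by move: hz; apply: contra => /eqP ->; rewrite mul0r.
  have h1q : 1 - q != 0.
    apply/eqP => e; move/eqP: hq2; apply.
    have -> : q = 1 by apply/eqP; rewrite eq_sym -subr_eq0 e.
    by rewrite expr1n.
  field. by rewrite hx h1q.
rewrite big_ltn // /qint muln0 add0n expr1 divff ?mul1r //.
apply/eqP => e; move/eqP: hq2; apply.
have -> : q = 1 by apply/eqP; rewrite eq_sym -subr_eq0 e.
by rewrite expr1n.
Qed.
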